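(* Let $N\ge2$ and $(b,a)\in\mathcal{M}=\mathbb{R}^N\times\mathbb{R}_{>0}^N$. Then for all $\lambda$ and both choices of sign, \[ \Delta_\lambda(S(b,a))\mp2=(-1)^N\Delta_{-\lambda}(b,a)\mp2, \] and consequently $\dot\Delta_\lambda(S(b,a))=(-1)^{N+1}\dot\Delta_{-\lambda}(b,a)$, where $\dot\Delta_\lambda=\partial_\lambda\Delta_\lambda$, and $\Delta_\lambda^2(S(b,a))-4=\Delta_{-\lambda}^2(b,a)-4$.
   Context: Indices of $(b,a)$ are mod $N$; $S(b,a)=(b',a')$ with $b'_j=-b_{N-j}$, $a'_j=a_{N-j-1}$. For $(b,a)\in\mathcal{M}$, let $y_1(k,\lambda),y_2(k,\lambda)$ be the solutions of $a_{k-1}y(k-1)+b_ky(k)+a_ky(k+1)=\lambda y(k)$ ($k\in\mathbb{Z}$) with $y_1(0)=1,y_1(1)=0,y_2(0)=0,y_2(1)=1$; the discriminant is $\Delta_\lambda(b,a)=y_1(N,\lambda)+y_2(N+1,\lambda)$, a polynomial in $\lambda$ of degree $N$. *)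

(* Defs.v *)
From HB Require Import structures.
From mathcomp Require Import all_boot all_order all_algebra.
From mathcomp Require Import reals.
Set Implicit Arguments. Unset Strict Implicit. Unset Printing Implicit Defensive.
Import Order.TTheory GRing.Theory Num.Theory.
Local Open Scope ring_scope.

Definition perent (R : Type) (N : nat) (z : R) (f : 'I_N -> R) (k : nat) : R :=
  match insub (k %% N)%N with Some i => f i | None => z end.

Definition pidx (R : realType) (N : nat) (f : 'I_N -> R) (k : nat) : R :=
  perent 0 f k.

(* jsol N b a y0 y1 k = (y(k), y(k+1)) as polynomials in lambda, where y solves
   a_{k-1} y(k-1) + b_k y(k) + a_k y(k+1) = lambda y(k)  (k >= 1),
   with initial data y(0) = y0, y(1) = y1; indices of b, a taken mod N. *)
Fixpoint jsol (R : realType) (N : nat) (b a : 'I_N -> R) (y0 y1 : {poly R})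
  (k : nat) : {poly R} * {poly R} :=
  match k with
  | 0 => (y0, y1)
  | k'.+1 =>
      let p := jsol b a y0 y1 k' in
      (p.2, (('X - (pidx b k'.+1)%:P) * p.2 - (pidx a k')%:P * p.1)
              * ((pidx a k'.+1)^-1)%:P)
  end.

(* The discriminant Delta_lambda(b,a) = y_1(N,lambda) + y_2(N+1,lambda),
   as a polynomial in lambda. *)
Definition disc (R : realType) (N : nat) (b a : 'I_N -> R) : {poly R} :=
  (jsol b a 1 0 N).1 + (jsol b a 0 1 N).2.

Definition Sb (R : realType) (N : nat) (b : 'I_N -> R) : 'I_N -> R :=
  fun j => - pidx b (N - j).
Definition Sa (R : realType) (N : nat) (a : 'I_N -> R) : 'I_N -> R :=
  fun j => pidx a (N - j - 1).

(* Main.v *)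
Require Import Defs.
From HB Require Import structures.
From mathcomp Require Import all_boot all_order all_algebra.
From mathcomp Require Import reals ring lra zify.
Import Order.TTheory GRing.Theory Num.Theory.
Local Open Scope ring_scope.

Section S.
Variables (R : realType) (N : nat).

Definition Tm (b a : 'I_N -> R) (lam : R) (j : nat) : 'M[R]_2 :=
 \matrix_(i < 2, k < 2) if (i : nat) == 0%N then (if (k:nat) == 0%N then 0 else 1)
   else (if (k:nat)==0%N then - pidx a (j + N - 1) / pidx a j
         else (lam - pidx b j) / pidx a j).

Definition Pm b a lam n : 'M[R]_2 := \prod_(i < n) Tm b a lam (n - i).

Lemma PmS b a lam n : Pm b a lam n.+1 = Tm b a lam n.+1 * Pm b a lam n.
Proof. by rewrite /Pm big_ord_recl subn0. Qed.

Lemma pidxD (f : 'I_N -> R) k : pidx f (k + N) = pidx f k.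
Proof. by rewrite /pidx /perent modnDr. Qed.

Lemma mul2E (A B : 'M[R]_2) i j : (A * B) i j = A i 0 * B 0 j + A i 1 * B 1 j.
Proof. rewrite -mulmxE mxE !big_ord_recl big_ord0 addr0.
by congr (A i _ * B _ j + A i _ * B _ j); apply: val_inj. Qed.

Lemma jsol_eval b a lam y0 y1 k :
  (jsol b a y0 y1 k).1.[lam] = Pm b a lam k 0 0 * y0.[lam] + Pm b a lam k 0 1 * y1.[lam] /\
  (jsol b a y0 y1 k).2.[lam] = Pm b a lam k 1 0 * y0.[lam] + Pm b a lam k 1 1 * y1.[lam].
Proof.
elim: k => [|k [IH1 IH2]].
  by rewrite /Pm big_ord0 /= !mxE /=; split; ring.
rewrite PmS /= !mul2E !mxE /=.
have -> : (k.+1 + N - 1 = k + N)%N by rewrite addSn subn1.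
rewrite pidxD; split; first by rewrite IH2; ring.
rewrite !hornerE IH1 IH2. ring.
Qed.

Lemma disc_tr b a lam : (disc b a).[lam] = \tr (Pm b a lam N).
Proof.
have [h1 _] := jsol_eval b a lam 1 0 N.
have [_ h2] := jsol_eval b a lam 0 1 N.
rewrite /disc hornerD h1 h2 !hornerE /mxtrace !big_ord_recl big_ord0 addr0.
rewrite /= addr0; congr (Pm b a lam N _ _ + Pm b a lam N _ _); exact: val_inj.
Qed.

Hypothesis N0 : (0 < N)%N.

Lemma pidxE (f : 'I_N -> R) k : pidx f k = f (Ordinal (ltn_pmod k N0)).
Proof.
rewrite /pidx /perent; case: insubP => [i _ hi|]; last by rewrite ltn_pmod.
by have -> : i = Ordinal (ltn_pmod k N0) by apply: val_inj.
Qed.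

Lemma pidx_pos (a : 'I_N -> R) k : (forall j, 0 < a j) -> 0 < pidx a k.
Proof. by move=> h; rewrite pidxE. Qed.

Lemma pidxM (f : 'I_N -> R) m n : (m %% N = n %% N)%N -> pidx f m = pidx f n.
Proof. by rewrite /pidx /perent => ->. Qed.

Lemma pidx_Sb (b : 'I_N -> R) i : (i < N)%N -> pidx (Sb b) (N - i) = - pidx b i.
Proof.
move=> iN; rewrite pidxE /Sb /=; congr (- _); apply: pidxM.
case: i iN => [|i] iN; first by rewrite subn0 modnn subn0 modnn mod0n.
by rewrite (modn_small (m := N - i.+1)) ?subKn // ?(ltnW iN) //; lia.
Qed.

Lemma pidx_Sa1 (a : 'I_N -> R) i : (i < N)%N -> pidx (Sa a) (N - i) = pidx a (i + N - 1).
Proof.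
move=> iN; rewrite pidxE /Sa /=; apply: pidxM.
case: i iN => [|i] iN; first by rewrite subn0 modnn subn0 add0n.
rewrite (modn_small (m := N - i.+1)) ?subKn ?(ltnW iN) //; last by lia.
have -> : (i.+1 + N - 1 = i + N)%N by lia.
by rewrite subn1 modnDr.
Qed.

Lemma pidx_Sa2 (a : 'I_N -> R) i : (i < N)%N -> pidx (Sa a) (N - i + N - 1) = pidx a i.
Proof.
move=> iN; rewrite pidxE /Sa /=; apply: pidxM.
have -> : (N - i + N - 1 = (N - i - 1) + N)%N by lia.
rewrite modnDr (modn_small (m := (N - i - 1)%N)); last by lia.
by have -> : (N - (N - i - 1) - 1 = i)%N by lia.
Qed.

Lemma TS (b a : 'I_N -> R) lam i : (forall j, 0 < a j) -> (i < N)%N ->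
  Tm (Sb b) (Sa a) lam (N - i) =
  (- (pidx a i / pidx a (i + N - 1))) *: (Tm b a (- lam) i)^T.
Proof.
move=> ha iN.
have h1 := @pidx_pos a i ha; have h2 := @pidx_pos a (i + N - 1)%N ha.
have n1 : pidx a i != 0 by rewrite gt_eqF.
have n2 : pidx a (i + N - 1) != 0 by rewrite gt_eqF.
apply/matrixP => p q; rewrite !mxE pidx_Sb // pidx_Sa1 // pidx_Sa2 //.
case: p => [[|[|p]] Hp] //; case: q => [[|[|q]] Hq] //=; field; by rewrite ?n1 ?n2.
Qed.

Lemma prod_trZ (s : nat -> R) (X : nat -> 'M[R]_2) n :
  \prod_(i < n) (s i *: (X i)^T) = (\prod_(i < n) s i) *: (\prod_(i < n) X (n - i.+1)%N)^T.
Proof.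
elim: n => [|n IH]; first by rewrite !big_ord0 scale1r trmx1.
rewrite big_ord_recr /= IH big_ord_recr /= [in RHS]big_ord_recl /= subn1 /=.
rewrite -mulmxE trmx_mul mulmxE.
rewrite -scalerAl -scalerAr scalerA; congr (_ *: (_ * _)).
Qed.

Lemma tele (a : 'I_N -> R) n : (forall j, 0 < a j) ->
  \prod_(i < n) (pidx a i / pidx a (i + N - 1)) = pidx a (n + N - 1) / pidx a (N - 1).
Proof.
move=> ha; have nz k : pidx a k != 0 by rewrite gt_eqF // pidx_pos.
elim: n => [|n IH]; first by rewrite big_ord0 add0n divff.
rewrite big_ord_recr /= IH.
have -> : (n.+1 + N - 1 = n + N)%N by lia.
rewrite pidxD; field; by rewrite !nz.
Qed.

Lemma Tper (b a : 'I_N -> R) lam : Tm b a lam N = Tm b a lam 0.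
Proof.
have e1 (f : 'I_N -> R) : pidx f N = pidx f 0 by have := pidxD f 0; rewrite add0n.
have e2 : pidx a (N + N - 1) = pidx a (0 + N - 1).
  have -> : (N + N - 1 = (N - 1) + N)%N by lia.
  by rewrite pidxD add0n.
by rewrite /Tm !e1 e2.
Qed.

Lemma trcyc (X : nat -> 'M[R]_2) n : X n.+1 = X 0 ->
  \tr (\prod_(i < n.+1) X (n.+1 - i.+1)%N) = \tr (\prod_(i < n.+1) X (n.+1 - i)%N).
Proof.
move=> hX; rewrite big_ord_recr big_ord_recl /= subnn subn0 mxtrace_mulC hX.
congr (\tr (_ * _)); apply: eq_bigr => i _ /=; by rewrite subSS.
Qed.

Lemma main_id (b a : 'I_N -> R) lam : (forall j, 0 < a j) ->
  (disc (Sb b) (Sa a)).[lam] = (-1) ^+ N * (disc b a).[- lam].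
Proof.
move=> ha; rewrite !disc_tr /Pm.
rewrite (eq_bigr (fun i : 'I_N => (- (pidx a i / pidx a (i + N - 1))) *: (Tm b a (- lam) i)^T)); last first.
  by move=> i _; rewrite TS.
rewrite (prod_trZ (fun i : nat => - (pidx a i / pidx a (i + N - 1))) (fun i : nat => Tm b a (- lam) i)) mxtraceZ mxtrace_tr prodrN card_ord tele // .
have -> : (N + N - 1 = (N - 1) + N)%N by lia.
rewrite pidxD divff ?gt_eqF ?pidx_pos // mulr1; congr (_ * _).
have := trcyc (fun k => Tm b a (- lam) k) (N.-1); rewrite prednK //; apply.
exact: Tper.
Qed.
End S.

Lemma poly_eval_eq (R : realType) (p q : {poly R}) : (forall x, p.[x] = q.[x]) -> p = q.
Proof.
move=> h; apply/eqP; rewrite -subr_eq0; apply/eqP.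
apply: (@roots_geq_poly_eq0 _ _ [seq i%:R | i <- iota 0 (size (p - q))]).
- by apply/allP => x /mapP [i _ ->]; rewrite /root hornerD hornerN h subrr.
- by rewrite map_inj_uniq ?iota_uniq // => i j /eqP; rewrite eqr_nat => /eqP.
- by rewrite size_map size_iota.
Qed.

Theorem corollary2p4 (R : realType) (N : nat) (b a : 'I_N -> R) :
  (2 <= N)%N -> (forall j, 0 < a j) ->
  forall lam : R,
  [/\ (disc (Sb b) (Sa a)).[lam] - 2 = (-1) ^+ N * (disc b a).[- lam] - 2,
      (disc (Sb b) (Sa a)).[lam] + 2 = (-1) ^+ N * (disc b a).[- lam] + 2,
      ((disc (Sb b) (Sa a))^`()).[lam] = (-1) ^+ N.+1 * ((disc b a)^`()).[- lam]
    & (disc (Sb b) (Sa a)).[lam] ^+ 2 - 4 = (disc b a).[- lam] ^+ 2 - 4].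
Proof.
move=> N2 ha lam.
have N0 : (0 < N)%N by lia.
have key x := @main_id R N N0 b a x ha.
have hp : disc (Sb b) (Sa a) = (-1) ^+ N *: (disc b a \Po (- 'X)).
  by apply: poly_eval_eq => x; rewrite key hornerZ horner_comp !hornerE.
split; rewrite ?key //.
- rewrite hp derivZ deriv_comp derivN derivX hornerZ hornerM horner_comp !hornerE exprS.
  by rewrite /= -signr_odd; case: (odd N) => /=; ring.
- by rewrite -signr_odd; case: (odd N) => /=; ring.
Qed.
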